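(* Let $X$ be a non-empty set, $R$ a binary relation on $X$, and $\tau$ a compact topology on $X$. Suppose $R$ is upper tc-semicontinuous with respect to $\tau$. Then the family $\mu(\Xi,\widetilde{R})$ of $\widetilde{R}$-maximal strong components of $(X,R)$ is non-empty.
   Context: For a binary relation $R$ on $X$, the transitive closure $\overline{R}$ is defined by: $x\overline{R}y$ iff there exist $K\ge 1$ and $x_0,\dots,x_K\in X$ with $x_0=x$, $x_K=y$, and $x_{k-1}Rx_k$ for all $k\in\{1,\dots,K\}$. $R$ is upper tc-semicontinuous with respect to $\tau$ if for every $x\in X$ the set $\{y\in X: x\overline{R}y\}$ is open in $\tau$. A topology is compact if every open cover of $X$ has a finite subcover. Strong components: define the equivalence relation $x\sim y$ iff $x=y$ or ($x\overline{R}y$ and $y\overline{R}x$). The ground sets of the strong components of $(X,R)$ are the equivalence classes of $\sim$ (so an element lying on no cycle forms a singleton component); they partition $X$. Let $\Xi=\{X_i : i\in I\}$ be the set of these classes. The contraction of $(X,R)$ is $(\Xi,\widetilde{R})$, where $X_i\widetilde{R}X_j$ iff there exist $x\in X_i$, $y\in X_j$ with $xRy$. A class $X_i\in\Xi$ is $\widetilde{R}$-maximal if there is no $X_j\in\Xi$ with $X_j\ne X_i$ and $X_j\widetilde{R}X_i$. $\mu(\Xi,\widetilde{R})$ denotes the family of $\widetilde{R}$-maximal classes in $\Xi$. *)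

(* Defs.v *)
From Stdlib Require Import Classical List.

Set Implicit Arguments.

Record topology (X : Type) := {
  t_open : (X -> Prop) -> Prop;
  t_open_full : t_open (fun _ => True);
  t_open_empty : t_open (fun _ => False);
  t_open_inter : forall U V, t_open U -> t_open V -> t_open (fun x => U x /\ V x);
  t_open_union : forall (F : (X -> Prop) -> Prop),
      (forall U, F U -> t_open U) -> t_open (fun x => exists U, F U /\ U x)
}.

Definition compact_top (X : Type) (tau : topology X) : Prop :=
  forall (I : Type) (U : I -> X -> Prop),
    (forall i, t_open tau (U i)) ->
    (forall x, exists i, U i x) ->
    exists l : list I, forall x, exists i, List.In i l /\ U i x.

Definition tc (X : Type) (R : X -> X -> Prop) (x y : X) : Prop :=
  exists (K : nat) (f : nat -> X),
    1 <= K /\ f 0 = x /\ f K = y /\ (forall k, 1 <= k <= K -> R (f (k - 1)) (f k)).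

Definition upper_tc_semicontinuous (X : Type) (R : X -> X -> Prop) (tau : topology X) :=
  forall x, t_open tau (fun y => tc R x y).

Definition scc_equiv (X : Type) (R : X -> X -> Prop) (x y : X) : Prop :=
  x = y \/ (tc R x y /\ tc R y x).

(* A ground set of a strong component: an equivalence class of scc_equiv. *)
Definition is_component (X : Type) (R : X -> X -> Prop) (C : X -> Prop) : Prop :=
  exists x, forall y, C y <-> scc_equiv R x y.

Definition contr (X : Type) (R : X -> X -> Prop) (Ci Cj : X -> Prop) : Prop :=
  exists x y, Ci x /\ Cj y /\ R x y.

(* Components are sets; equality of classes is extensional equality. *)
Definition same_set (X : Type) (A B : X -> Prop) : Prop := forall x, A x <-> B x.

Definition contr_maximal (X : Type) (R : X -> X -> Prop) (Ci : X -> Prop) : Prop :=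
  is_component R Ci /\
  ~ (exists Cj, is_component R Cj /\ ~ same_set Cj Ci /\ contr R Cj Ci).

(* Main.v *)
Require Import Defs.
From Stdlib Require Import Classical List Arith Lia.

Lemma tc_R (X : Type) (R : X -> X -> Prop) x y : R x y -> tc R x y.
Proof.
  intro H. exists 1, (fun k => match k with 0 => x | _ => y end).
  split; [lia|]. split; [reflexivity|]. split; [reflexivity|].
  intros k Hk. assert (k = 1) by lia. subst k. simpl. exact H.
Qed.

Lemma tc_trans (X : Type) (R : X -> X -> Prop) x y z :
  tc R x y -> tc R y z -> tc R x z.
Proof.
  intros [K1 [f [H1 [H2 [H3 H4]]]]] [K2 [g [G1 [G2 [G3 G4]]]]].
  exists (K1 + K2), (fun k => if Nat.leb k K1 then f k else g (k - K1)).
  split; [lia|]. split.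
  { simpl. exact H2. }
  split.
  { destruct (Nat.leb (K1 + K2) K1) eqn:E.
    - apply Nat.leb_le in E. lia.
    - replace (K1 + K2 - K1) with K2 by lia. exact G3. }
  intros k Hk.
  destruct (Nat.leb k K1) eqn:E.
  - apply Nat.leb_le in E.
    destruct (Nat.leb (k - 1) K1) eqn:E2.
    + apply H4. lia.
    + apply Nat.leb_gt in E2. lia.
  - apply Nat.leb_gt in E.
    destruct (Nat.leb (k - 1) K1) eqn:E2.
    + apply Nat.leb_le in E2. assert (k - 1 = K1) by lia.
      rewrite H. rewrite H3. rewrite <- G2.
      replace (k - K1) with 1 by lia. apply (G4 1). lia.
    + apply Nat.leb_gt in E2.
      replace (k - 1 - K1) with (k - K1 - 1) by lia. apply G4. lia.
Qed.

Lemma scc_sym (X : Type) (R : X -> X -> Prop) x y :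
  scc_equiv R x y -> scc_equiv R y x.
Proof. intros [H|[H1 H2]]; [left; auto|right; auto]. Qed.

Lemma scc_trans (X : Type) (R : X -> X -> Prop) x y z :
  scc_equiv R x y -> scc_equiv R y z -> scc_equiv R x z.
Proof.
  intros [H|[H1 H2]] [G|[G1 G2]]; subst; try (left; reflexivity);
  try (right; split; assumption).
  right; split; eapply tc_trans; eauto.
Qed.

Lemma list_min (I : Type) (S : I -> I -> Prop)
  (Strans : forall a b c, S a b -> S b c -> S a c) :
  forall l : list I, (exists i, In i l) ->
  exists a, In a l /\ forall b, In b l -> S b a -> S a b.
Proof.
  induction l as [|a l IH]; intros [i Hi]; [destruct Hi|].
  destruct l as [|c l'].
  - exists a. split; [left; auto|]. intros b [<-|[]] Hb; auto.
  - destruct IH as [m [Hm Hmin]]. { exists c. left; auto. }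
    destruct (classic (S a m /\ ~ S m a)) as [[Ham Hma]|Hn].
    + exists a. split; [left; auto|].
      intros b [<-|Hb] Hba; auto.
      apply Strans with m; auto. apply Hmin; auto. eapply Strans; eauto.
    + exists m. split; [right; auto|].
      intros b [<-|Hb] Hbm; auto.
      apply NNPP. intro Hc. apply Hn. auto.
Qed.

Theorem lemma2 (X : Type) (R : X -> X -> Prop) (tau : topology X) :
  inhabited X ->
  compact_top tau ->
  upper_tc_semicontinuous R tau ->
  exists C : X -> Prop, contr_maximal R C.
Proof.
  intros [x0] Hc Hu.
  apply NNPP. intro Hno.
  assert (Hstep : forall x, exists z, tc R z x /\ ~ tc R x z).
  { intro x. apply NNPP. intro Hx. apply Hno.
    exists (scc_equiv R x). split.
    { exists x. intro y; tauto. }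
    intros [Cj [[c Hcj] [Hns [z [w [Hz [Hw Hzw]]]]]]].
    apply Hx. exists z. split.
    - destruct Hw as [<-|[_ Hwx]].
      + apply tc_R; auto.
      + eapply tc_trans; [apply tc_R; eauto|auto].
    - intro Hxz. apply Hns. intro y.
      assert (Hzx : tc R z x).
      { destruct Hw as [<-|[_ Hwx]].
        + apply tc_R; auto.
        + eapply tc_trans; [apply tc_R; eauto|auto]. }
      assert (Ecx : scc_equiv R c x).
      { apply scc_trans with z. apply Hcj; auto. right; auto. }
      rewrite Hcj. split; intro H.
      + eapply scc_trans; [apply scc_sym; eauto|auto].
      + eapply scc_trans; eauto. }
  set (I := {p : X * X | tc R (fst p) (snd p) /\ ~ tc R (snd p) (fst p)}).
  set (U := fun i : I => fun y => tc R (fst (proj1_sig i)) y).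
  destruct (Hc I U) as [l Hl].
  { intro i. apply Hu. }
  { intro x. destruct (Hstep x) as [z [H1 H2]].
    exists (exist _ (z, x) (conj H1 H2)). exact H1. }
  destruct (@list_min I (fun i j : I => tc R (fst (proj1_sig i)) (fst (proj1_sig j)))) with (l := l) as [a [Ha Hmin]].
  { intros; eapply tc_trans; eauto. }
  { destruct (Hl x0) as [i [Hi _]]. eauto. }
  set (y := fst (proj1_sig a)).
  destruct (Hstep y) as [z' [Hz1 Hz2]].
  destruct (Hl z') as [j [Hj Hjz]].
  unfold U in Hjz.
  assert (Hja : tc R (fst (proj1_sig j)) (fst (proj1_sig a))).
  { eapply tc_trans; eauto. }
  apply Hmin in Hja; auto.
  apply Hz2. eapply tc_trans; eauto.
Qed.
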